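(* Let $n\ge2$, $\ell\ge1$, and $\lambda,\mu\in P_n$ with $\lambda-\mu\equiv\sum_{i=1}^n\ell_i\epsilon_i$ modulo $\mathbb C\epsilon$ for nonnegative integers $\ell_1,\dots,\ell_n$ with $\sum_i\ell_i=\ell$. Let $u_{\lambda,\mu}\in F_\lambda(M(\mu))$ be the image of $v_\mu\otimes u_1^{\otimes\ell_1}\otimes\cdots\otimes u_n^{\otimes\ell_n}$, and let $\bar y_i$ be the operator on $F_\lambda(M(\mu))$ induced by $y_i$. Then for each $i=1,\dots,\ell$, $$\bar y_iu_{\lambda,\mu}=\zeta_i\,u_{\lambda,\mu},$$ where, for $\sum_{k<m}\ell_k<i\le\sum_{k\le m}\ell_k$, $\zeta_i=\mu'_m+i-\sum_{k<m}\ell_k-1$ with $\mu'_m=\langle\mu+\rho,\epsilon^\vee_m\rangle$.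
   Context: $\mathfrak{sl}_n=\mathfrak n_+\oplus\mathfrak h_n\oplus\mathfrak n_-$ standard; $\epsilon_i$ the $i$-th diagonal coordinate, $\epsilon=\sum_i\epsilon_i$; $\mathfrak h_n^*$ is identified with $\{\sum\lambda_i\epsilon_i:\sum\lambda_i=0\}\subset\mathfrak t_n^*=\bigoplus\mathbb C\epsilon_i$, with $\epsilon_i^\vee$ the dual basis of $\mathfrak t_n$; $\rho=\sum_i\frac{n-2i+1}{2}\epsilon_i$; $P_n$ is the integral weight lattice. $M(\mu)$ is the Verma module with highest weight vector $v_\mu$; $V_n=\mathbb C^n$ with standard basis $u_1,\dots,u_n$ ($u_i$ of weight the restriction of $\epsilon_i$ to $\mathfrak h_n$). $F_\lambda(X)=H_0(\mathfrak n_-,X\otimes V_n^{\otimes\ell})_\lambda=(X\otimes V_n^{\otimes\ell}/\mathfrak n_-(X\otimes V_n^{\otimes\ell}))_\lambda$. With $(x|y)=\mathrm{tr}(xy)$, $\Omega=\sum_a x_a\otimes x^a$ for dual bases, $\Omega_{ij}$ acting in tensor factors $i,j$ of $X\otimes V_n^{\otimes\ell}$ (factor $0$ is $X$), the operators $y_i=\Omega_{0i}+\sum_{1\le j<i}(\Omega_{ji}+\frac1n)+\frac{n-1}2$ commute with $\mathfrak{sl}_n$ and thus induce operators $\bar y_i$ on $F_\lambda(X)$. *)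

(* Defs.v *)
From HB Require Import structures.
From mathcomp Require Import all_boot all_order all_algebra.
From mathcomp Require Import complex Rstruct.
Set Implicit Arguments. Unset Strict Implicit. Unset Printing Implicit Defensive.
Import Order.TTheory GRing.Theory Num.Theory.
Local Open Scope ring_scope.

Definition C : fieldType := (Rdefinitions.R)[i].

Definition E (n : nat) (a b : 'I_n) : 'M[C]_n := delta_mx a b.

(* An sl_n-module structure on X: a map rho : gl_n -> End(X), linear in both
   arguments, whose restriction to sl_n = traceless matrices is a Lie algebra
   morphism.  (Only values on traceless matrices are ever used; any
   representation of sl_n extends linearly to such a rho.) *)
Definition sl_module (n : nat) (X : lmodType C) (rho : 'M[C]_n -> X -> X) : Prop :=
  [/\ (forall A (a : C) (x y : X), rho A (a *: x + y) = a *: rho A x + rho A y),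
      (forall A B (a : C) (x : X), rho (a *: A + B) x = a *: rho A x + rho B x) &
      (forall A B (x : X), \tr A = 0 -> \tr B = 0 ->
          rho (A *m B - B *m A) x = rho A (rho B x) - rho B (rho A x))].

(* Weights: elements of h_n^* identified with {sum_i lam_i eps_i : sum lam_i = 0}. *)
Definition hweight (n : nat) (lam : 'I_n -> C) : Prop := \sum_i lam i = 0.

Definition is_int (x : C) : Prop := exists z : int, x = z%:~R.

(* P_n: integral weights, <lam, alpha_i^vee> = lam_i - lam_{i+1} in Z. *)
Definition integral_weight (n : nat) (lam : 'I_n -> C) : Prop :=
  hweight lam /\ forall i j : 'I_n, j = i.+1 :> nat -> is_int (lam i - lam j).

Definition hw_vector (n : nat) (X : lmodType C) (rho : 'M[C]_n -> X -> X)
    (mu : 'I_n -> C) (v : X) : Prop :=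
  (forall a b : 'I_n, (a < b)%N -> rho (E a b) v = 0) /\
  (forall d : 'rV[C]_n, \sum_i d 0 i = 0 ->
      rho (diag_mx d) v = (\sum_i mu i * d 0 i) *: v).

(* (X, rho, v) is the Verma module M(mu) with highest weight vector v_mu,
   characterised by its universal property among sl_n-modules. *)
Definition is_verma (n : nat) (X : lmodType C) (rho : 'M[C]_n -> X -> X)
    (mu : 'I_n -> C) (v : X) : Prop :=
  sl_module rho /\ hw_vector rho mu v /\
  forall (Y : lmodType C) (rhoY : 'M[C]_n -> Y -> Y) (y : Y),
    sl_module rhoY -> hw_vector rhoY mu y ->
    exists phi : X -> Y,
      [/\ (forall (a : C) (x x' : X), phi (a *: x + x') = a *: phi x + phi x'),
          (forall A (x : X), \tr A = 0 -> phi (rho A x) = rhoY A (phi x)),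
          phi v = y &
          (forall psi : X -> Y,
             (forall (a : C) (x x' : X), psi (a *: x + x') = a *: psi x + psi x') ->
             (forall A (x : X), \tr A = 0 -> psi (rho A x) = rhoY A (psi x)) ->
             psi v = y -> forall x, psi x = phi x)].

(* X (x) V_n^{(x) l}: since V_n^{(x) l} has basis u_{s_1} (x) ... (x) u_{s_l}
   indexed by s : 'I_l -> 'I_n, the tensor product is the space of functions
   s |-> (coefficient in X);  F = sum_s F(s) (x) u_{s_1} (x) ... (x) u_{s_l}.
   Tensor factor 0 is X, factor p (1 <= p <= l) is the p-th copy of V_n,
   i.e. index p.-1 of s. *)
Definition tens (n l : nat) (X : lmodType C) := {ffun {ffun 'I_l -> 'I_n} -> X}.

Definition upd (n l : nat) (s : {ffun 'I_l -> 'I_n}) (k : 'I_l) (j : 'I_n)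
  : {ffun 'I_l -> 'I_n} := [ffun t => if t == k then j else s t].

(* Action of A in the p-th tensor factor; V_n action: A u_j = sum_i A_ij u_i. *)
Definition act_fac (n l : nat) (X : lmodType C) (rho : 'M[C]_n -> X -> X)
    (p : nat) (A : 'M[C]_n) (F : tens n l X) : tens n l X :=
  match p with
  | 0 => [ffun s : {ffun 'I_l -> 'I_n} => rho A (F s)]
  | p'.+1 =>
    match (insub p' : option 'I_l) with
    | Some k => [ffun s : {ffun 'I_l -> 'I_n} => \sum_(j : 'I_n) A (s k) j *: F (upd s k j)]
    | None => 0
    end
  end.

Definition act_tot (n l : nat) (X : lmodType C) (rho : 'M[C]_n -> X -> X)
    (A : 'M[C]_n) (F : tens n l X) : tens n l X :=
  \sum_(p < l.+1) act_fac rho p A F.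

Definition in_nminus_image (n l : nat) (X : lmodType C) (rho : 'M[C]_n -> X -> X)
    (F : tens n l X) : Prop :=
  exists W : 'I_n -> 'I_n -> tens n l X,
    F = \sum_(a : 'I_n) \sum_(b : 'I_n | (b < a)%N) act_tot rho (E a b) (W a b).

(* Dual bases of sl_n with respect to (x|y) = tr(xy):
   x = E_ab (a <> b) with dual E_ba, and
   x = H_k = E_kk - E_{n,n} (k < n, 1-indexed) with dual E_kk - (1/n) Id. *)
Definition Elast (n : nat) : 'M[C]_n :=
  \matrix_(i, j) ((i == j :> nat) && (i == n.-1 :> nat))%:R.

Definition Omega (n l : nat) (X : lmodType C) (rho : 'M[C]_n -> X -> X)
    (p q : nat) (F : tens n l X) : tens n l X :=
  \sum_(a : 'I_n) \sum_(b : 'I_n | a != b)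
      act_fac rho p (E a b) (act_fac rho q (E b a) F)
  + \sum_(k : 'I_n | (k < n.-1)%N)
      act_fac rho p (E k k - Elast n)
        (act_fac rho q (E k k - (n%:R)^-1 *: 1%:M) F).

Definition yop (n l : nat) (X : lmodType C) (rho : 'M[C]_n -> X -> X)
    (i : nat) (F : tens n l X) : tens n l X :=
  Omega rho 0 i F
  + \sum_(1 <= j < i) (Omega rho j i F + (n%:R)^-1 *: F)
  + ((n%:R - 1) / 2) *: F.

(* s = (1,..,1,2,..,2,...,n,..,n) with l_m copies of m. *)
Definition std_seq (n l : nat) (ls : 'I_n -> nat) (s : {ffun 'I_l -> 'I_n}) : bool :=
  [forall k : 'I_l, (\sum_(j < n | (j < s k)%N) ls j <= k)%N
                    && (k < \sum_(j < n | (j <= s k)%N) ls j)%N].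

Definition wvec (n l : nat) (X : lmodType C) (ls : 'I_n -> nat) (v : X) : tens n l X :=
  [ffun s : {ffun 'I_l -> 'I_n} => if std_seq ls s then v else 0].

(* rho = sum_i (n-2i+1)/2 eps_i, i 1-indexed; the coordinate of index m : 'I_n
   corresponds to i = m+1. *)
Definition rhoW (n : nat) (m : 'I_n) : C :=
  (n%:R - 2 * (m.+1)%:R + 1) / 2.

(* Main.v *)
Require Import Defs.
From HB Require Import structures.
From mathcomp Require Import all_boot all_order all_algebra.
From mathcomp Require Import complex Rstruct.
From mathcomp Require Import zify ring.
Import Order.TTheory GRing.Theory Num.Theory.
Local Open Scope ring_scope.
Set Implicit Arguments. Unset Strict Implicit. Unset Printing Implicit Defensive.
Definition pt (n l : nat) (X : lmodType C) (t : {ffun 'I_l -> 'I_n}) (x : X) : tens n l X :=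
  [ffun s => if s == t then x else 0].

Definition rlin (n : nat) (X : lmodType C) (rho : 'M[C]_n -> X -> X) :=
  forall A (a : C) (x y : X), rho A (a *: x + y) = a *: rho A x + rho A y.

Lemma rho0 n (X : lmodType C) (rho : 'M[C]_n -> X -> X) : rlin rho -> forall A, rho A 0 = 0.
Proof.
move=> lin A; have h := lin A 1 0 0; rewrite scaler0 add0r scale1r in h.
by apply: (addrI (rho A 0)); rewrite addr0 -h.
Qed.

Lemma actS n l (X : lmodType C) (rho : 'M[C]_n -> X -> X) (k : 'I_l) A (F : tens n l X) :
  act_fac rho k.+1 A F = [ffun s : {ffun 'I_l -> 'I_n} => \sum_(j : 'I_n) A (s k) j *: F (upd s k j)].
Proof. by rewrite /act_fac valK. Qed.

Lemma act_lin n l (X : lmodType C) (rho : 'M[C]_n -> X -> X) p A c (F G : tens n l X) :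
  rlin rho ->
  act_fac rho p A (c *: F + G) = c *: act_fac rho p A F + act_fac rho p A G.
Proof.
move=> lin; case: p => [|p] /=.
  by apply/ffunP => s; rewrite !ffunE lin.
case: insub => [k|]; last by rewrite scaler0 addr0.
apply/ffunP => s; rewrite !ffunE scaler_sumr -big_split; apply: eq_bigr => j _.
by rewrite !ffunE scalerDr !scalerA mulrC.
Qed.

Lemma act0 n l (X : lmodType C) (rho : 'M[C]_n -> X -> X) p A :
  rlin rho -> act_fac rho p A (0 : tens n l X) = 0.
Proof.
move=> lin; have h := @act_lin n l X rho p A 1 0 0 lin; rewrite !scale1r addr0 in h.
by apply: (addrI (act_fac rho p A 0)); rewrite addr0 -h.
Qed.

Lemma actZ n l (X : lmodType C) (rho : 'M[C]_n -> X -> X) p A c (F : tens n l X) :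
  rlin rho -> act_fac rho p A (c *: F) = c *: act_fac rho p A F.
Proof. by move=> lin; rewrite -[c *: F]addr0 act_lin // act0 // addr0. Qed.

Lemma pt_lin n l (X : lmodType C) (t : {ffun 'I_l -> 'I_n}) c (x y : X) :
  pt t (c *: x + y) = c *: pt t x + pt t y.
Proof. by apply/ffunP => s; rewrite !ffunE; case: eqP => _; rewrite ?scaler0 ?addr0. Qed.

Lemma pt0 n l (X : lmodType C) (t : {ffun 'I_l -> 'I_n}) : pt t (0 : X) = 0.
Proof. by apply/ffunP => s; rewrite !ffunE; case: eqP. Qed.

Lemma ptZ n l (X : lmodType C) (t : {ffun 'I_l -> 'I_n}) c (x : X) : pt t (c *: x) = c *: pt t x.
Proof. by rewrite -[c *: x]addr0 pt_lin pt0 addr0. Qed.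

Lemma pt_fac0 n l (X : lmodType C) (rho : 'M[C]_n -> X -> X) A (t : {ffun 'I_l -> 'I_n}) x :
  rlin rho -> act_fac rho 0 A (pt t x) = pt t (rho A x).
Proof. by move=> lin; apply/ffunP => s; rewrite !ffunE; case: eqP => // _; rewrite rho0. Qed.

Definition agree n l (s t : {ffun 'I_l -> 'I_n}) (k : 'I_l) :=
  [forall p, (p != k) ==> (s p == t p)].

Lemma upd_eqE n l (s t : {ffun 'I_l -> 'I_n}) k j :
  (upd s k j == t) = (j == t k) && agree s t k.
Proof.
apply/eqP/andP => [<-|[/eqP -> /forallP h]].
  split; first by rewrite ffunE eqxx.
  by apply/forallP => p; apply/implyP => hp; rewrite ffunE (negbTE hp).
apply/ffunP => p; rewrite ffunE; case: eqP => [->|/eqP hp] //.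
exact/eqP/(implyP (h p)).
Qed.

Lemma agreeC n l (s t : {ffun 'I_l -> 'I_n}) k : agree s t k = agree t s k.
Proof.
by apply/forallP/forallP => h p; apply/implyP => hp; rewrite eq_sym; exact: (implyP (h p)).
Qed.

Lemma sum_delta (I : finType) (V : nmodType) (F : I -> V) j0 :
  \sum_i (if i == j0 then F i else 0) = F j0.
Proof. by rewrite -big_mkcond big_pred1_eq. Qed.

Lemma sum_delta_cond (I : finType) (V : nmodType) (P : pred I) (F : I -> V) j0 :
  \sum_(i | P i) (if j0 == i then F i else 0) = if P j0 then F j0 else 0.
Proof.
rewrite big_mkcond (eq_bigr (fun i => if i == j0 then (if P i then F i else 0) else 0)).
  by rewrite sum_delta.
by move=> i _; rewrite eq_sym; case: eqP => [->|]; case: (P _).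
Qed.

Lemma sumZ_delta n (X : lmodType C) (F : 'I_n -> C) (x : X) j0 g :
  \sum_j F j *: (if (j == j0) && g then x else 0) = if g then F j0 *: x else 0.
Proof.
rewrite (eq_bigr (fun j => if j == j0 then (if g then F j *: x else 0) else 0)).
  by rewrite sum_delta.
by move=> j _; case: (j == j0); case: g; rewrite /= ?scaler0.
Qed.

Lemma pt_facS n l (X : lmodType C) (rho : 'M[C]_n -> X -> X) (k : 'I_l) A
    (t : {ffun 'I_l -> 'I_n}) x :
  act_fac rho k.+1 A (pt t x) = \sum_(j : 'I_n) A j (t k) *: pt (upd t k j) x.
Proof.
apply/ffunP => s; rewrite actS !ffunE sum_ffunE.
rewrite (eq_bigr (fun j => A (s k) j *: (if (j == t k) && agree s t k then x else 0))); last first.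
  by move=> j _; rewrite ffunE upd_eqE.
rewrite sumZ_delta (eq_bigr (fun j => A j (t k) *: (if (j == s k) && agree s t k then x else 0)))
  ; last first.
  by move=> j _; rewrite !ffunE eq_sym upd_eqE agreeC.
by rewrite sumZ_delta.
Qed.

Lemma upd_id n l (t : {ffun 'I_l -> 'I_n}) k : upd t k (t k) = t.
Proof. by apply/ffunP => p; rewrite ffunE; case: eqP => // ->. Qed.

Lemma upd_upd n l (t : {ffun 'I_l -> 'I_n}) k a b : upd (upd t k a) k b = upd t k b.
Proof. by apply/ffunP => p; rewrite !ffunE; case: eqP. Qed.

Lemma updE n l (t : {ffun 'I_l -> 'I_n}) k a p : p != k -> upd t k a p = t p.
Proof. by move=> h; rewrite ffunE (negbTE h). Qed.

Lemma updE' n l (t : {ffun 'I_l -> 'I_n}) k a : upd t k a k = a.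
Proof. by rewrite ffunE eqxx. Qed.

Lemma ptE n l (X : lmodType C) (rho : 'M[C]_n -> X -> X) (k : 'I_l) a b
    (t : {ffun 'I_l -> 'I_n}) x :
  act_fac rho k.+1 (E a b) (pt t x) = if t k == b then pt (upd t k a) x else 0.
Proof.
rewrite pt_facS (eq_bigr (fun j => if j == a then (if t k == b then pt (upd t k j) x else 0) else 0)).
  by rewrite sum_delta.
by move=> j _; rewrite /E mxE; case: (j == a); case: (t k == b); rewrite /= ?scale0r ?scale1r.
Qed.

Lemma ptD n l (X : lmodType C) (rho : 'M[C]_n -> X -> X) (k : 'I_l) (D : 'M[C]_n)
    (t : {ffun 'I_l -> 'I_n}) x :
  (forall j, j != t k -> D j (t k) = 0) ->
  act_fac rho k.+1 D (pt t x) = D (t k) (t k) *: pt t x.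
Proof.
move=> hD; rewrite pt_facS (bigD1 (t k)) //= big1 ?addr0 ?upd_id //.
by move=> j hj; rewrite hD // scale0r.
Qed.

Lemma Elast_E n (lo : 'I_n) : nat_of_ord lo = n.-1 -> Elast n = E lo lo.
Proof.
move=> hlo; apply/matrixP => i j; rewrite !mxE.
have -> : (i == lo) = (nat_of_ord i == n.-1) by rewrite -hlo.
have -> : (j == lo) = (nat_of_ord j == n.-1) by rewrite -hlo.
by case: (nat_of_ord i =P n.-1) => [->|_]; rewrite ?andbF // andbT eq_sym.
Qed.

Lemma lt_lo n (lo : 'I_n) (k : 'I_n) : nat_of_ord lo = n.-1 -> (k < n.-1)%N = (k != lo).
Proof.
move=> hlo; have hk := ltn_ord k.
have -> : (k != lo) = (nat_of_ord k != n.-1) by rewrite -hlo.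
lia.
Qed.

Lemma sum_natdelta n (F : 'I_n -> C) m : \sum_k (k == m)%:R * F k = F m.
Proof.
rewrite (eq_bigr (fun k => if k == m then F k else 0)) ?sum_delta //.
by move=> k _; case: eqP; rewrite ?mul1r ?mul0r.
Qed.

Lemma sum_natdelta' n (F : 'I_n -> C) m : \sum_k (m == k)%:R * F k = F m.
Proof. by rewrite -(sum_natdelta F m); apply: eq_bigr => k _; rewrite eq_sym. Qed.

Lemma sum_ind n (m : 'I_n) : \sum_k ((k == m)%:R : C) = 1.
Proof. by rewrite (eq_bigr (fun k => if k == m then 1 else 0)) ?sum_delta // => k _; case: eqP. Qed.

Lemma sum_ind' n (m : 'I_n) : \sum_k ((m == k)%:R : C) = 1.
Proof. by rewrite (eq_bigr (fun k => if k == m then 1 else 0)) ?sum_delta // => k _; rewrite eq_sym; case: eqP. Qed.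

Lemma ninvK n : (0 < n)%N -> (n%:R : C)^-1 * n%:R = 1.
Proof. by move=> h; rewrite mulVf // pnatr_eq0 -lt0n. Qed.

Lemma extend_lo n (lo : 'I_n) (f : 'I_n -> C) : nat_of_ord lo = n.-1 -> f lo = 0 ->
  \sum_(k' : 'I_n | (k' < n.-1)%N) f k' = \sum_k' f k'.
Proof.
move=> hlo h0; rewrite [RHS](bigD1 lo) //= h0 add0r.
by apply: eq_bigl => k; rewrite (lt_lo k hlo).
Qed.

Lemma SC1 n (lo : 'I_n) (mu : 'I_n -> C) m : (0 < n)%N -> nat_of_ord lo = n.-1 ->
  \sum_i mu i = 0 ->
  \sum_(k' : 'I_n | (k' < n.-1)%N) ((k' == m)%:R - (n%:R)^-1) * (mu k' - mu lo) = mu m.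
Proof.
move=> hn hlo hmu; rewrite (@extend_lo n lo _ hlo); last by rewrite subrr mulr0.
rewrite (eq_bigr (fun k => (k == m)%:R * mu k - (k == m)%:R * mu lo
    - (n%:R)^-1 * mu k + (n%:R)^-1 * mu lo)); last by move=> k _; ring.
rewrite !big_split /= ?sumrN -!mulr_sumr -mulr_suml sum_natdelta hmu.
rewrite sum_ind sumr_const card_ord -[mu lo *+ n]mulr_natr.
have := ninvK hn; move: (n%:R : C)^-1 => a ha.
by rewrite mul1r mulr0 subr0 mulrCA ha mulr1 subrK.
Qed.

Lemma SC2 n (lo : 'I_n) m c : (0 < n)%N -> nat_of_ord lo = n.-1 ->
  \sum_(k' : 'I_n | (k' < n.-1)%N) ((k' == m)%:R - (n%:R)^-1) * ((c == k')%:R - (c == lo)%:R)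
  = (m == c)%:R - (n%:R : C)^-1.
Proof.
move=> hn hlo; rewrite (@extend_lo n lo _ hlo); last by rewrite subrr mulr0.
rewrite (eq_bigr (fun k => (k == m)%:R * (c == k)%:R - (k == m)%:R * (c == lo)%:R
    - (n%:R)^-1 * (c == k)%:R + (n%:R)^-1 * (c == lo)%:R)); last by move=> k _; ring.
rewrite !big_split /= ?sumrN -!mulr_sumr -mulr_suml sum_natdelta.
rewrite sum_ind sum_ind' sumr_const card_ord -[((c == lo)%:R : C) *+ n]mulr_natr.
have := ninvK hn; move: (n%:R : C)^-1 => a ha.
rewrite mul1r mulr1 mulrCA ha mulr1 eq_sym.
by rewrite addrAC subrK.
Qed.

Lemma diagE_entry n (k' lo c : 'I_n) :
  (E k' k' - E lo lo) c c = (c == k')%:R - (c == lo)%:R.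
Proof. by rewrite !mxE !andbb. Qed.

Lemma OmegaX_gen n l (X : lmodType C) (rho : 'M[C]_n -> X -> X) (k : 'I_l)
    (t : {ffun 'I_l -> 'I_n}) (x : X) : rlin rho ->
  Omega rho 0 k.+1 (pt t x) =
    \sum_(b | t k != b) pt (upd t k b) (rho (E (t k) b) x)
  + \sum_(k' : 'I_n | (k' < n.-1)%N)
      (((k' == t k)%:R - (n%:R)^-1) *: pt t (rho (E k' k' - Elast n) x)).
Proof.
move=> lin; rewrite /Omega; congr (_ + _).
  rewrite (eq_bigr (fun a => if a == t k then
      \sum_(b | t k != b) pt (upd t k b) (rho (E (t k) b) x) else 0)); first by rewrite sum_delta.
  move=> a _; case: eqP => [->|/eqP ha].
    by apply: eq_bigr => b _; rewrite ptE eqxx pt_fac0.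
  by apply: big1 => b _; rewrite ptE eq_sym (negbTE ha) act0.
apply: eq_bigr => k' _; rewrite ptD; last first.
  move=> j hj; rewrite !mxE (negbTE hj) mulr0n mulr0 subr0.
  case: (j =P k') => [ejk|] //=; case: (t k =P k') => [ekk|] //=.
  by rewrite ejk -ekk eqxx in hj.
rewrite actZ // pt_fac0 //; congr (_ *: _).
by rewrite !mxE eqxx andbb mulr1n mulr1 eq_sym.
Qed.

Lemma diag_eq n (a b : 'I_n) :
  E a a - E b b = diag_mx (\row_i ((i == a)%:R - (i == b)%:R : C)).
Proof.
apply/matrixP => i j; rewrite !mxE; case: (eqVneq i j) => [<-|hij].
  by rewrite !andbb mulr1n.
have h1 : forall c, (i == c) && (j == c) = false.
  by move=> c; apply/negbTE; apply: contra hij => /andP[/eqP -> /eqP ->].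
by rewrite !h1 mulr0n subrr.
Qed.

Lemma hw_diag n (X : lmodType C) (rho : 'M[C]_n -> X -> X) (mu : 'I_n -> C) (v : X) a b :
  (forall d : 'rV[C]_n, \sum_i d 0 i = 0 ->
      rho (diag_mx d) v = (\sum_i mu i * d 0 i) *: v) ->
  rho (E a a - E b b) v = (mu a - mu b) *: v.
Proof.
move=> hd; rewrite diag_eq hd.
  congr (_ *: _); rewrite (eq_bigr (fun i => (i == a)%:R * mu i - (i == b)%:R * mu i)).
    by rewrite sumrB !sum_natdelta.
  by move=> i _; rewrite mxE; ring.
rewrite (eq_bigr (fun i => (i == a)%:R - (i == b)%:R)); last by move=> i _; rewrite mxE.
by rewrite sumrB !sum_ind subrr.
Qed.

Lemma OmegaX_v n l (X : lmodType C) (rho : 'M[C]_n -> X -> X) (mu : 'I_n -> C) (v : X)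
    (k : 'I_l) (t : {ffun 'I_l -> 'I_n}) (m lo : 'I_n) :
  rlin rho ->
  (forall a b : 'I_n, (a < b)%N -> rho (E a b) v = 0) ->
  (forall d : 'rV[C]_n, \sum_i d 0 i = 0 ->
      rho (diag_mx d) v = (\sum_i mu i * d 0 i) *: v) ->
  \sum_i mu i = 0 -> (0 < n)%N -> nat_of_ord lo = n.-1 -> t k = m ->
  Omega rho 0 k.+1 (pt t v) =
    \sum_(b : 'I_n | (b < m)%N) pt (upd t k b) (rho (E m b) v) + mu m *: pt t v.
Proof.
move=> lin hup hd hmu hn hlo htk.
rewrite OmegaX_gen // htk (Elast_E hlo); congr (_ + _).
  rewrite big_mkcond [RHS]big_mkcond; apply: eq_bigr => b _.
  case: (ltngtP b m) => h.
  - by rewrite neq_ltn h orbT.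
  - by rewrite neq_ltn h /= hup // pt0.
  - by rewrite (val_inj h) eqxx.
rewrite (eq_bigr (fun k' => (((k' == m)%:R - (n%:R)^-1) * (mu k' - mu lo)) *: pt t v)).
  by rewrite -scaler_suml SC1.
by move=> k' _; rewrite (hw_diag _ _ hd) ptZ scalerA.
Qed.

Lemma OmegaVV n l (X : lmodType C) (rho : 'M[C]_n -> X -> X) (q k : 'I_l)
    (t : {ffun 'I_l -> 'I_n}) (x : X) (lo : 'I_n) :
  rlin rho -> (0 < n)%N -> nat_of_ord lo = n.-1 -> q != k ->
  Omega rho q.+1 k.+1 (pt t x) + (n%:R)^-1 *: pt t x =
    if t q == t k then pt t x else pt (upd (upd t k (t q)) q (t k)) x.
Proof.
move=> lin hn hlo hqk; rewrite /Omega.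
have -> : \sum_a \sum_(b | a != b) act_fac rho q.+1 (E a b) (act_fac rho k.+1 (E b a) (pt t x))
   = if t k != t q then pt (upd (upd t k (t q)) q (t k)) x else 0.
  rewrite (eq_bigr (fun a => if a == t k then
      \sum_(b | t k != b) act_fac rho q.+1 (E (t k) b) (pt (upd t k b) x) else 0)).
    rewrite sum_delta.
    rewrite (eq_bigr (fun b => if t q == b then pt (upd (upd t k b) q (t k)) x else 0)).
      by rewrite sum_delta_cond.
    by move=> b _; rewrite ptE updE.
  move=> a _; case: eqP => [->|/eqP ha].
    by apply: eq_bigr => b _; rewrite ptE eqxx.
  by apply: big1 => b _; rewrite ptE eq_sym (negbTE ha) act0.
rewrite (Elast_E hlo).
rewrite (eq_bigr (fun k' => (((k' == t k)%:R - (n%:R)^-1) * ((t q == k')%:R - (t q == lo)%:R))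
   *: pt t x)); last first.
  move=> k' _; rewrite ptD; last first.
    move=> j hj; rewrite !mxE (negbTE hj) mulr0n mulr0 subr0.
    case: (j =P k') => [ejk|] //=; case: (t k =P k') => [ekk|] //=.
    by rewrite ejk -ekk eqxx in hj.
  rewrite actZ // ptD ?diagE_entry; last first.
    move=> j hj; rewrite !mxE.
    have h1 : forall c, (j == c) && (t q == c) = false.
      by move=> c; apply/negbTE; apply: contra hj => /andP[/eqP -> /eqP ->].
    by rewrite !h1 subrr.
  rewrite scalerA; congr (_ *: _); congr (_ * _).
  by rewrite !mxE eqxx andbb mulr1n mulr1 eq_sym.
rewrite -scaler_suml SC2 // eq_sym.
case: eqP => [->|_] /=; rewrite ?eqxx.
  by rewrite add0r -scalerDl subrK scale1r.
by rewrite sub0r scaleNr subrK.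
Qed.

Lemma sub_sum n (ls : 'I_n -> nat) (P Q : pred 'I_n) : (forall j, P j -> Q j) ->
  (\sum_(j | P j) ls j <= \sum_(j | Q j) ls j)%N.
Proof.
move=> h; rewrite [X in (X <= _)%N]big_mkcond [X in (_ <= X)%N]big_mkcond.
apply: leq_sum => j _; case: (boolP (P j)) => hP; first by rewrite (h j hP).
by case: (Q j).
Qed.

Lemma LeLt n (ls : 'I_n -> nat) (c d : 'I_n) : (c < d)%N ->
  (\sum_(j < n | (j <= c)%N) ls j <= \sum_(j < n | (j < d)%N) ls j)%N.
Proof. by move=> h; apply: sub_sum => j hj; apply: leq_ltn_trans h. Qed.

Lemma Uniq n (ls : 'I_n -> nat) (c d : 'I_n) (p : nat) :
  (\sum_(j < n | (j < c)%N) ls j <= p < \sum_(j < n | (j <= c)%N) ls j)%N ->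
  (\sum_(j < n | (j < d)%N) ls j <= p < \sum_(j < n | (j <= d)%N) ls j)%N -> c = d.
Proof.
move=> /andP[h1 h2] /andP[h3 h4]; case: (ltngtP c d) => h.
- by have := LeLt ls h; lia.
- by have := LeLt ls h; lia.
- exact: val_inj.
Qed.

Lemma stdP n l (ls : 'I_n -> nat) (s : {ffun 'I_l -> 'I_n}) : std_seq ls s ->
  forall p : 'I_l,
  (\sum_(j < n | (j < s p)%N) ls j <= p < \sum_(j < n | (j <= s p)%N) ls j)%N.
Proof. by move/forallP. Qed.

Lemma std_uniq n l (ls : 'I_n -> nat) (s t : {ffun 'I_l -> 'I_n}) :
  std_seq ls s -> std_seq ls t -> s = t.
Proof.
move=> hs ht; apply/ffunP => p; exact: (Uniq (stdP hs p) (stdP ht p)).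
Qed.

Lemma rearr (V : zmodType) (A x y Cb z u : V) :
  A + x + (y + Cb) + z - (x + y + z - u) = A + u + Cb.
Proof.
have -> : A + x + (y + Cb) + z = (A + Cb) + (x + y + z).
  by rewrite [y + Cb]addrC !addrA -[A + x + Cb]addrA [x + Cb]addrC !addrA.
by rewrite opprB addrA addrAC addrK addrAC.
Qed.

Lemma acttot0 n l (X : lmodType C) (rho : 'M[C]_n -> X -> X) A :
  rlin rho -> act_tot rho A (0 : tens n l X) = 0.
Proof. by move=> lin; apply: big1 => p _; rewrite act0. Qed.

Lemma Omega_0 n l (X : lmodType C) (rho : 'M[C]_n -> X -> X) p q :
  rlin rho -> Omega rho p q (0 : tens n l X) = 0.
Proof.
move=> lin; rewrite /Omega big1 ?add0r; last first.
  by move=> a _; apply: big1 => b _; rewrite !act0.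
by apply: big1 => j _; rewrite !act0.
Qed.

Lemma yop_0 n l (X : lmodType C) (rho : 'M[C]_n -> X -> X) i :
  rlin rho -> yop rho i (0 : tens n l X) = 0.
Proof.
move=> lin; rewrite /yop Omega_0 // !scaler0 addr0 add0r.
by apply: big1 => j _; rewrite Omega_0 // addr0.
Qed.

Lemma acttot_pt n l (X : lmodType C) (rho : 'M[C]_n -> X -> X) a b
    (t : {ffun 'I_l -> 'I_n}) (x : X) : rlin rho ->
  act_tot rho (E a b) (pt t x) =
    pt t (rho (E a b) x) + \sum_(p : 'I_l) (if t p == b then pt (upd t p a) x else 0).
Proof.
move=> lin; rewrite /act_tot big_ord_recl pt_fac0 //; congr (_ + _).
by apply: eq_bigr => p _; rewrite lift0 ptE.
Qed.

Lemma sum_lt n (V : nmodType) (m : 'I_n) (x : V) :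
  \sum_(b < n | (b < m)%N) x = x *+ m.
Proof.
rewrite (@big_ord_narrow _ _ _ m n (fun _ => x) (ltnW (ltn_ord m))).
by rewrite sumr_const card_ord.
Qed.

Theorem mainTheorem4 (n l : nat) (ls : 'I_n -> nat) (lam mu : 'I_n -> C)
    (X : lmodType C) (rho : 'M[C]_n -> X -> X) (v : X) :
  (2 <= n)%N -> (1 <= l)%N ->
  integral_weight lam -> integral_weight mu ->
  (\sum_(m < n) ls m)%N = l ->
  (exists c : C, forall m : 'I_n, lam m - mu m = (ls m)%:R + c) ->
  is_verma rho mu v ->
  forall (i : nat) (m : 'I_n),
    (1 <= i <= l)%N ->
    (\sum_(k < n | (k < m)%N) ls k < i <= \sum_(k < n | (k <= m)%N) ls k)%N ->
    in_nminus_image rho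
      (yop rho i (wvec l ls v)
       - (mu m + rhoW m + (i%:R - (\sum_(k < n | (k < m)%N) ls k)%:R - 1))
           *: wvec l ls v).
Proof.
move=> hn _ _ [hmu _] _ _ [[lin _ _] [[hup hd] _]] i m /andP[hi1 hil] /andP[hLi hiL].
have {}lin : rlin rho by [].
case: i hi1 hil hLi hiL => [//|k'] _ hkl hLk hkL.
pose k : 'I_l := Ordinal hkl.
have hn0 : (0 < n)%N by lia.
have hlon : (n.-1 < n)%N by lia.
pose lo : 'I_n := Ordinal hlon.
have hlo : nat_of_ord lo = n.-1 by [].
case: (boolP [exists s : {ffun 'I_l -> 'I_n}, std_seq ls s]) => [/existsP [s0 hs0]|hne]; last first.
  have -> : wvec l ls v = 0.
    apply/ffunP => s; rewrite !ffunE; case: ifP => // hs.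
    by move/existsP: hne => hne; case: hne; exists s.
  exists (fun _ _ => 0); rewrite yop_0 // scaler0 subr0 big1 // => a _.
  by apply: big1 => b _; rewrite acttot0.
have hw : wvec l ls v = pt s0 v.
  apply/ffunP => s; rewrite !ffunE; case: (boolP (std_seq ls s)) => h.
    by rewrite (std_uniq h hs0) eqxx.
  by case: eqP h => // ->; rewrite hs0.
rewrite hw.
have hLk' : (\sum_(j < n | (j < m)%N) ls j <= k')%N := hLk.
have hkL' : (k' < \sum_(j < n | (j <= m)%N) ls j)%N := hkL.
have hs0k : s0 k = m.
  by apply: (Uniq (stdP hs0 k)); rewrite /= hLk' hkL'.
exists (fun a b => if a == m then pt (upd s0 k b) v else 0).
rewrite [RHS](bigD1 m) //= [X in _ = _ + X]big1 ?addr0; last first.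
  by move=> a ham; apply: big1 => b _; rewrite (negbTE ham) acttot0.
rewrite eqxx.
have es0 : upd s0 k m = s0 by rewrite -hs0k upd_id.
rewrite (eq_bigr (fun b => pt (upd s0 k b) (rho (E m b) v) + pt s0 v +
   \sum_(p | p != k) (if s0 p == b then pt (upd (upd s0 k b) p m) v else 0))); last first.
  move=> b hb; rewrite acttot_pt // -addrA; congr (_ + _).
  rewrite (bigD1 k) //= updE' eqxx upd_upd es0; congr (_ + _).
  by apply: eq_bigr => p hp; rewrite updE.
rewrite !big_split /= sum_lt.
set L := \sum_(j < n | (j < m)%N) ls j.
have fb : forall p : 'I_l, (s0 p < m)%N -> (p < k')%N.
  move=> p h; case/andP: (stdP hs0 p) => h1 h2.
  exact: (leq_trans h2 (leq_trans (LeLt ls h) hLk')).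
have fc : forall p : 'I_l, (p < k')%N -> (s0 p <= m)%N.
  move=> p hpk; rewrite leqNgt; apply/negP => h.
  case/andP: (stdP hs0 p) => h1 h2.
  have := leq_trans hpk (ltnW (leq_trans hkL' (leq_trans (LeLt ls h) h1))).
  by rewrite ltnn.
rewrite /yop (OmegaX_v lin hup hd hmu hn0 hlo hs0k).
rewrite big_add1 /= big_mkord.
rewrite (big_ord_widen l (fun j => Omega rho j.+1 k'.+1 (pt s0 v) + (n%:R)^-1 *: pt s0 v) (ltnW hkl)).
rewrite (eq_bigr (fun q : 'I_l => ((s0 q == m)%:R *: pt s0 v) +
   (if s0 q == m then 0 else pt (upd (upd s0 k (s0 q)) q m) v))); last first.
  move=> q hq; have hqk : q != k.
    by apply/eqP => e; rewrite e /= ltnn in hq.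
  rewrite (@OmegaVV n l X rho q k s0 v lo lin hn0 hlo hqk) hs0k.
  by case: eqP => _; rewrite ?scale1r ?scale0r ?addr0 ?add0r.
rewrite big_split /= -scaler_suml.
have hcnt : \sum_(q < l | (q < k')%N) ((s0 q == m)%:R : C) = (k' - L)%:R.
  rewrite -natr_sum; congr (_%:R).
  rewrite (eq_bigr (fun q : 'I_l => nat_of_bool (L <= q)%N)); last first.
    move=> q hq; congr nat_of_bool; apply/eqP/idP => [e|h].
      by move: (stdP hs0 q); rewrite e => /andP[h1 _]; exact: h1.
    apply: (Uniq (stdP hs0 q)).
    by rewrite h (ltn_trans hq hkL').
  rewrite -(big_ord_widen l (fun q => nat_of_bool (L <= q)%N) (ltnW hkl)).
  rewrite -(big_mkord xpredT (fun i => nat_of_bool (L <= i)%N)).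
  rewrite (@big_cat_nat _ _ _ L 0 k' xpredT (fun i => nat_of_bool (L <= i)%N) (leq0n L) hLk') /=.
  rewrite [X in (X + _)%N]big_nat_cond big1 ?add0n; last first.
    by move=> q /andP[/andP[_ hq] _]; rewrite leqNgt hq.
  rewrite (eq_big_nat _ _ (F2 := fun _ => 1%N)); last by move=> q /andP[hq _]; rewrite hq.
  by rewrite sum_nat_const_nat muln1.
have hC : \sum_(q < l | (q < k')%N)
      (if s0 q == m then 0 else pt (upd (upd s0 k (s0 q)) q m) v)
    = \sum_(i < n | (i < m)%N) \sum_(p < l | p != k)
        (if s0 p == i then pt (upd (upd s0 k i) p m) v else 0).
  rewrite [RHS]exchange_big /=.
  rewrite [RHS](eq_bigr (fun p => if (s0 p < m)%N then
      pt (upd (upd s0 k (s0 p)) p m) v else 0)); last by move=> p _; rewrite sum_delta_cond.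
  rewrite big_mkcond [RHS]big_mkcond; apply: eq_bigr => p _.
  case: (ltnP p k') => hpk.
    have -> : p != k by apply/eqP => e; rewrite e /= ltnn in hpk.
    case: (s0 p =P m) => [->|/eqP hne]; first by rewrite ltnn.
    have -> : (s0 p < m)%N by rewrite ltn_neqAle (fc p hpk) andbT; exact: hne.
    by [].
  have -> : (s0 p < m)%N = false.
    by apply/negbTE; apply: (contraL _ hpk) => /fb; rewrite -ltnNge.
  by case: (p != k).
rewrite hcnt hC.
have hz : mu m + rhoW m + ((k'.+1)%:R - L%:R - 1) =
    mu m + (k' - L)%:R + ((n%:R - 1) / 2) - m%:R.
  rewrite /rhoW natrB //.
  have h2 : (2 : C) != 0 by rewrite pnatr_eq0.
  by field.
rewrite hz scalerBl !scalerDl !scaler_nat.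
exact: rearr.
Qed.
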